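(* Let $q$ be even. The unipotent conjugacy classes of type $(2,1)$ in $\mathbf{SL}_3(q)$ are not of type F.
   Context: Type $(2,1)$: Jordan blocks of sizes 2 and 1. Conjugacy classes are racks with $x\triangleright y=xyx^{-1}$. A rack is of type F if it has pairwise disjoint subracks $R_1,\dots,R_4$ and elements $r_a\in R_a$ with $R_a\triangleright R_b=R_b$ and $r_a\triangleright r_b\neq r_b$ for all $a\neq b$. *)

(* Defs.v *)
From HB Require Import structures.
From mathcomp Require Import all_boot all_order all_algebra all_fingroup.
Set Implicit Arguments. Unset Strict Implicit. Unset Printing Implicit Defensive.
Import GRing.Theory.
Local Open Scope ring_scope.

(* Rack operation on a group: x |> y = x y x^-1.  (MathComp's y ^ g is g^-1 y g.) *)
Definition rtri (gT : finGroupType) (x y : gT) : gT := (y ^ x^-1)%g.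

Definition rack_act (gT : finGroupType) (A B : {set gT}) : {set gT} :=
  [set rtri x y | x in A, y in B].

Definition is_subrack (gT : finGroupType) (C R : {set gT}) : bool :=
  (R \subset C) && [forall x in R, forall y in R, rtri x y \in R].

Definition typeF (gT : finGroupType) (C : {set gT}) : Prop :=
  exists (R : 'I_4 -> {set gT}) (r : 'I_4 -> gT),
    [/\ forall a, is_subrack C (R a),
        forall a b, a != b -> [disjoint R a & R b],
        forall a, r a \in R a,
        forall a b, a != b -> rack_act (R a) (R b) = R b
      & forall a b, a != b -> rtri (r a) (r b) != r b].

Definition SL3 (F : finFieldType) : {set {'GL_3[F]}} :=
  [set g : {'GL_3[F]} | \det (GLval g) == 1%R].

(* Unipotent 3x3 matrix of Jordan type (2,1): N = A - 1 is nilpotent with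
   N^2 = 0 (largest block size 2) and rank N = 1 (exactly 3 - 1 = 2 blocks). *)
Definition unipotent_type21 (F : finFieldType) (A : 'M[F]_3) : bool :=
  ([&& (A - 1) ^+ 3 == 0, (A - 1) ^+ 2 == 0 & \rank (A - 1) == 1%N])%R.

(* Main.v *)
Require Import Defs.
From mathcomp Require Import all_boot all_order all_algebra all_fingroup all_solvable all_field.
Set Implicit Arguments. Unset Strict Implicit. Unset Printing Implicit Defensive.
Import GRing.Theory.
Local Open Scope ring_scope.

Lemma char2 (F : finFieldType) : ~~ odd #|F| -> forall x : F, x + x = 0.
Proof.
move=> ev x.
have [p pr_p pc] := finPcharP F.
have pg : (p.-group [set: F])%g := abelem_pgroup (fin_ring_pchar_abelem pc).
have p2 : p = 2%N.
  have d2 : (2 %| #|[set: F]|)%N by rewrite cardsT dvdn2.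
  have := pnat_dvd d2 pg.
  by rewrite pnatE // inE => /eqP.
by rewrite -mulr2n -mulr_natl; move: pc; rewrite p2 => /andP[_ /eqP ->]; rewrite mul0r.
Qed.

Lemma comb (D : 'I_4 -> 'I_4 -> bool) :
  (forall a b, a != b -> D a b = ~~ D b a) ->
  (forall a b c, D a b -> D b c -> D c a -> False) ->
  exists a b c d, [&& D a b, D b c, D c d, ~~ D c b, ~~ D d b & ~~ D d c].
Proof.
move=> T C.
pose o0 := @Ordinal 4 0 isT; pose o1 := @Ordinal 4 1 isT.
pose o2 := @Ordinal 4 2 isT; pose o3 := @Ordinal 4 3 isT.
have r10 := T o1 o0 isT; have r20 := T o2 o0 isT; have r30 := T o3 o0 isT.
have r21 := T o2 o1 isT; have r31 := T o3 o1 isT; have r32 := T o3 o2 isT.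
case e01: (D o0 o1) in r10; case e02: (D o0 o2) in r20; case e03: (D o0 o3) in r30;
case e12: (D o1 o2) in r21; case e13: (D o1 o3) in r31; case e23: (D o2 o3) in r32;
simpl in r10, r20, r30, r21, r31, r32;
first [ exfalso; match goal with
   | H1 : D ?a ?b = true, H2 : D ?b ?c = true, H3 : D ?c ?a = true |- _ => exact: (C _ _ _ H1 H2 H3) end
 | match goal with
   | H1 : D ?a ?b = true, H2 : D ?b ?c = true, H3 : D ?c ?d = true, H4 : D ?b ?d = true,
     H5 : D ?c ?b = false, H6 : D ?d ?b = false, H7 : D ?d ?c = false |- _ =>
     exists a, b, c, d; by rewrite H1 H2 H3 H5 H6 H7 end ].
Qed.

Section M.
Variable F : fieldType.
Implicit Types (u : 'cV[F]_3) (w : 'rV[F]_3).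
Definition sc w u : F := (w *m u) 0 0.

Lemma sc_mx w u : w *m u = (sc w u)%:M.
Proof. exact: mx11_scalar. Qed.

Lemma outer_mul u w u' w' : u *m w *m (u' *m w') = sc w u' *: (u *m w').
Proof. by rewrite mulmxA -(mulmxA u) sc_mx mul_mx_scalar scalemxAl. Qed.

Lemma outer_mulr u w u' : u *m w *m u' = sc w u' *: u.
Proof. by rewrite -mulmxA sc_mx mul_mx_scalar. Qed.

Lemma outer_mull u w w' : w' *m (u *m w) = sc w' u *: w.
Proof. by rewrite mulmxA sc_mx mul_scalar_mx. Qed.

Lemma nz_entry m n (A : 'M[F]_(m,n)) : A != 0 -> exists i j, A i j != 0.
Proof.
move=> nz; case: (pickP (fun ij : 'I_m * 'I_n => A ij.1 ij.2 != 0)) => [[i j] /= h|h].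
  by exists i, j.
case/eqP: nz; apply/matrixP => i j; rewrite mxE.
by move: (h (i, j)) => /= /negbFE/eqP.
Qed.

Lemma outer_neq0 u w : u != 0 -> w != 0 -> u *m w != 0.
Proof.
move=> /nz_entry[i [k hi]] /nz_entry[k' [j hj]].
apply/eqP => /matrixP /(_ i j); rewrite !mxE big_ord1 (ord1 k) (ord1 k') in hi hj *.
by move/eqP; rewrite mulf_eq0 (negbTE hi) (negbTE hj).
Qed.

Lemma scale_eq0_cV m n (a : F) (A : 'M[F]_(m,n)) : a != 0 -> a *: A = 0 -> A = 0.
Proof. by move=> a0 /eqP; rewrite scalemx_eq0 (negbTE a0) => /eqP. Qed.

Lemma rank1_decomp (A : 'M[F]_3) : \rank A = 1%N -> exists u w, A = u *m w.
Proof.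
move=> r1.
exists (col_ebase A *m (delta_mx 0 0 : 'M_(3,1))), ((delta_mx 0 0 : 'M_(1,3)) *m row_ebase A).
rewrite -{1}(mulmx_ebase A) r1 !mulmxA; congr (_ *m _); rewrite -!mulmxA; congr (_ *m _).
rewrite mul_delta_mx; apply/matrixP => i j; rewrite !mxE.

by case: i => [[|[|[|i]]] Hi]; case: j => [[|[|[|j]]] Hj].
Qed.

Definition tv (N : 'M[F]_3) := exists u w, [/\ N = u *m w, sc w u = 0 & N != 0].

Lemma tv_conj (P N : 'M[F]_3) : P \in unitmx -> tv N -> tv (invmx P *m N *m P).
Proof.
move=> uP [u [w [-> h nz]]].
exists (invmx P *m u), (w *m P); split.
- by rewrite !mulmxA.
- by rewrite /sc -mulmxA (mulmxA P) mulmxV // mul1mx.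
- apply: contraNneq nz => h0.
  have := congr1 (fun X => P *m X *m invmx P) h0 => /=.
  by rewrite mulmx0 mul0mx !mulmxA mulmxV // mul1mx mulmxK // => ->.
Qed.

Lemma conj_sub1 (P X : 'M[F]_3) : P \in unitmx ->
  invmx P *m X *m P - 1 = invmx P *m (X - 1) *m P.
Proof. by move=> uP; rewrite mulmxBr mulmxBl mulmx1 mulVmx. Qed.


Lemma tv_sq N : tv N -> N *m N = 0.
Proof. by case=> u [w [-> h _]]; rewrite outer_mul h scale0r. Qed.

Lemma eig0 (M : 'M[F]_3) u1 w1 u2 : u1 != 0 -> sc w1 u2 != 0 -> M *m M = 0 ->
  M *m (u1 *m w1) = u1 *m w1 *m M -> M *m u1 = 0.
Proof.
move=> u10 a0 MM comm.
have key : sc w1 u2 *: (M *m u1) = sc w1 (M *m u2) *: u1.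
  have := congr1 (fun X => X *m u2) comm => /=.
  by rewrite -mulmxA outer_mulr -scalemxAr -mulmxA outer_mulr.
set a := sc w1 u2 in key a0; set mu := sc w1 (M *m u2) in key.
have h1 : mu *: (M *m u1) = 0.
  have := congr1 (fun X => M *m X) key => /=.
  by rewrite -!scalemxAr mulmxA MM mul0mx scaler0 => <-.
have h2 : (mu * mu) *: u1 = 0.
  by rewrite -scalerA -key scalerA mulrC -scalerA h1 scaler0.
have mu0 : mu = 0.
  by move: h2 => /eqP; rewrite scalemx_eq0 (negbTE u10) orbF mulf_eq0 orbb => /eqP.
by move: key; rewrite mu0 scale0r => /eqP; rewrite scalemx_eq0 (negbTE a0) => /eqP.
Qed.

Lemma pow_fix (G X : 'M[F]_3) k : G *m X = X -> G ^+ k *m X = X.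
Proof.
move=> h; elim: k => [|k IH]; first by rewrite expr0 mul1mx.
by rewrite exprS mulmxE -mulrA -mulmxE IH.
Qed.

Lemma M_zero (Ns Nt M : 'M[F]_3) k : tv Ns -> tv Nt -> Ns *m Nt != 0 -> Nt *m Ns != 0 ->
  M *m M = 0 -> M *m Ns = Ns *m M -> M *m Nt = Nt *m M ->
  M = ((1 + Nt) *m (1 + Ns)) ^+ k - 1 -> M = 0.
Proof.
move=> [u1 [w1 [-> s1 n1]]] [u2 [w2 [-> s2 n2]]].
rewrite outer_mul => nst; rewrite outer_mul => nts MM c1 c2 eM.
set a := sc w1 u2 in nst; set b := sc w2 u1 in nts.
have a0 : a != 0 by apply: contraNneq nst => ->; rewrite scale0r.
have b0 : b != 0 by apply: contraNneq nts => ->; rewrite scale0r.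
have u10 : u1 != 0 by apply: contraNneq n1 => ->; rewrite mul0mx.
have u20 : u2 != 0 by apply: contraNneq n2 => ->; rewrite mul0mx.
set E := b^-1 *: (u1 *m w2) + a^-1 *: (u2 *m w1).
have hs : u1 *m w1 *m E = u1 *m w1.
  rewrite mulmxDr -!scalemxAr !outer_mul s1 -/a scale0r scaler0 add0r.
  by rewrite scalerA mulVf // scale1r.
have ht : u2 *m w2 *m E = u2 *m w2.
  rewrite mulmxDr -!scalemxAr !outer_mul s2 -/b scale0r scaler0 addr0.
  by rewrite scalerA mulVf // scale1r.
have hG : (1 + u2 *m w2) *m (1 + u1 *m w1) *m (1 - E) = 1 - E.
  rewrite -mulmxA [X in _ *m X]mulmxDl mul1mx mulmxBr mulmx1 hs subrr addr0.
  by rewrite mulmxDl mul1mx mulmxBr mulmx1 ht subrr addr0.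
have hM1 : M *m (1 - E) = 0.
  by rewrite eM mulmxBl pow_fix // mul1mx subrr.
have m1 : M *m u1 = 0 by apply: (eig0 u10 a0).
have m2 : M *m u2 = 0 by apply: (eig0 u20 b0).
have hME : M *m E = 0.
  by rewrite mulmxDr -!scalemxAr !mulmxA m1 m2 !mul0mx !scaler0 addr0.
by move: hM1; rewrite mulmxBr mulmx1 hME subr0.
Qed.

Lemma tv_nz (u : 'cV[F]_3) (w : 'rV[F]_3) : u *m w != 0 -> (u != 0) && (w != 0).
Proof.
move=> h; apply/andP; split; apply: contraNneq h => ->; by rewrite ?mul0mx ?mulmx0.
Qed.

Lemma scD (ux uy : 'cV[F]_3) (wx wy : 'rV[F]_3) : ux *m wx != 0 -> uy *m wy != 0 ->
  (ux *m wx *m (uy *m wy) == 0) = (sc wx uy == 0).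
Proof.
move=> /tv_nz/andP[ux0 _] /tv_nz/andP[_ wy0].
by rewrite outer_mul scalemx_eq0 (negbTE (outer_neq0 ux0 wy0)) orbF.
Qed.

Lemma chain (Na Nb Nc Nd : 'M[F]_3) : tv Na -> tv Nb -> tv Nc -> tv Nd ->
  Na *m Nb != 0 -> Nb *m Nc != 0 -> Nc *m Nd != 0 ->
  Nc *m Nb = 0 -> Nd *m Nb = 0 -> Nd *m Nc = 0 -> False.
Proof.
move=> [ua [wa [-> sa na]]] [ub [wb [-> sb nb]]] [uc [wc [-> s_c nc]]] [ud [wd [-> sd nd]]].
rewrite scD // => ab; rewrite scD // => bc; rewrite scD // => cd.
move=> /eqP; rewrite scD // => /eqP cb.
move=> /eqP; rewrite scD // => /eqP db.
move=> /eqP; rewrite scD // => /eqP dc.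
pose f (j : 'I_3) := if j == 0 :> nat then ud else if j == 1 :> nat then uc else ub.
pose g (i : 'I_3) := if i == 0 :> nat then wc else if i == 1 :> nat then wb else wa.
pose U := \matrix_(i, j) f j i 0.
pose W := \matrix_(i, j) g i 0 j.
have WU i j : (W *m U) i j = sc (g i) (f j).
  rewrite mxE /sc mxE; apply: eq_bigr => k _; by rewrite !mxE.
have trig : is_trig_mx (W *m U).
  apply/is_trig_mxP => i j; rewrite WU /g /f.
  by case: i => [[|[|[|i]]] Hi]; case: j => [[|[|[|j]]] Hj].
have dT : \det (W *m U) != 0.
  rewrite det_trig // big_ord_recr /= big_ord_recr /= big_ord1 !WU /g /f /=.
  by rewrite !mulf_neq0.
have uU : U \in unitmx.
  by rewrite unitmxE unitfE; apply: contraNneq dT; rewrite det_mulmx => ->; rewrite mulr0.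
have wdU : wd *m U = 0.
  apply/matrixP => i j; rewrite !mxE.
  have -> : \sum_k wd i k * U k j = sc wd (f j).
    rewrite /sc mxE (ord1 i); apply: eq_bigr => k _; by rewrite mxE.
  by rewrite /f; case: j => [[|[|[|j]]] Hj] //=.
have : wd = 0 by rewrite -(mulmxK uU wd) wdU mul0mx.
by move: (tv_nz nd) => /andP[_ /eqP].
Qed.
End M.

Lemma tv_x (F : finFieldType) (A : 'M[F]_3) : unipotent_type21 A -> tv (A - 1).
Proof.
case/and3P => _ /eqP sq /eqP r1.
have [u [w e]] := rank1_decomp r1.
have nz : A - 1 != 0 by rewrite -mxrank_eq0 r1.
exists u, w; split => //.
move: sq; rewrite expr2 -mulmxE e outer_mul => /eqP.
by rewrite scalemx_eq0 -e (negbTE nz) orbF => /eqP.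
Qed.

Section M2.
Variable F : fieldType.
Hypothesis c2 : forall x : F, x + x = 0.
Lemma mx_c2 (A : 'M[F]_3) : A + A = 0.
Proof. by apply/matrixP => i j; rewrite !mxE c2. Qed.

Lemma invol_mx (Y : 'M[F]_3) : tv (Y - 1) -> Y *m Y = 1.
Proof.
move=> /tv_sq h; rewrite -(subrK 1 Y); move: (Y - 1) h => n h.
by rewrite mulmxDl !mulmxDr !mul1mx mulmx1 h add0r addrA mx_c2 add0r.
Qed.

Lemma comm_mx (S T : 'M[F]_3) : (S - 1) *m (T - 1) = 0 -> (T - 1) *m (S - 1) = 0 ->
  S *m T = T *m S.
Proof.
move=> h1 h2; rewrite -(subrK 1 S) -(subrK 1 T); move: (S - 1) (T - 1) h1 h2 => ns nt h1 h2.
rewrite !mulmxDl !mulmxDr !mul1mx !mulmx1 h1 h2 !add0r.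
by rewrite !addrA (addrC ns).
Qed.

Lemma sq_mx (H : 'M[F]_3) : H *m H = 1 -> (H - 1) *m (H - 1) = 0.
Proof.
move=> h; rewrite mulmxBl !mulmxBr h !mulmx1 mul1mx.
have e : forall A : 'M[F]_3, - A = A by move=> A; rewrite -[LHS]add0r -(mx_c2 A) addrK.
by rewrite !e addrA -(addrA 1 H H) mx_c2 addr0 mx_c2.
Qed.

Lemma comm1_mx (H S : 'M[F]_3) : H *m S = S *m H -> (H - 1) *m (S - 1) = (S - 1) *m (H - 1).
Proof.
move=> h; rewrite !mulmxBl !mulmxBr h !mulmx1 !mul1mx.
by rewrite !opprB !addrA [in LHS]addrAC [X in X + 1]addrAC [in RHS]addrAC.
Qed.
Lemma triple (Na Nb Nc : 'M[F]_3) : tv Na -> Nc *m Na != 0 -> Na *m Nb != 0 ->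
  Nc *m Na *m Nb != 0.
Proof.
case=> u [w [-> _ _]] h1 h2.
have cu : Nc *m u != 0 by apply: contraNneq h1; rewrite mulmxA => ->; rewrite mul0mx.
have wb : w *m Nb != 0 by apply: contraNneq h2; rewrite -mulmxA => ->; rewrite mulmx0.
by rewrite mulmxA -mulmxA; exact: outer_neq0.
Qed.

Lemma cyc_mx (Na Nb Nc : 'M[F]_3) : tv Na -> Na *m Nb != 0 -> Nb *m Nc != 0 ->
  Nc *m Na != 0 -> Nb *m Na = 0 -> Nc *m Nb = 0 ->
  ((1 + Na) *m ((1 + Nb) *m (1 + Na)) - 1) *m Nc != 0 /\
  Nc *m ((1 + Na) *m ((1 + Nb) *m (1 + Na)) - 1) != 0.
Proof.
move=> ta ab bc ca ba cb.
have e : (1 + Na) - 1 = Na by rewrite addrC addKr.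
have AA : (1 + Na) *m (1 + Na) = 1 by apply: invol_mx; rewrite e.
have eS : (1 + Na) *m ((1 + Nb) *m (1 + Na)) - 1 = (1 + Na) *m Nb *m (1 + Na).
  by rewrite [(1 + Nb) *m _]mulmxDl mul1mx mulmxDr AA mulmxA addrC addKr.
rewrite eS; split.
  rewrite -mulmxA [(1 + Na) *m Nc]mulmxDl mul1mx mulmxDr (mulmxA _ Na Nc) -(mulmxA _ Nb Na) ba mulmx0 mul0mx addr0 -mulmxA.
  apply: contraNneq bc => h.
  by have := congr1 (mulmx (1 + Na)) h; rewrite mulmxA AA mul1mx mulmx0 => ->.
rewrite !mulmxA mulmxDr mulmx1 -(mulmxA _ Nb Na) ba mulmx0 addr0 mulmxDr mulmx1 mulmxDl cb add0r.
exact: triple.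
Qed.
End M2.

Section G.
Variable F : finFieldType.
Hypothesis c2 : forall x : F, x + x = 0.
Local Notation gT := {'GL_3[F]}.
Local Notation N y := (GLval y - 1).

Lemma invol (y : gT) : tv (N y) -> (y * y = 1)%g.
Proof. by move=> h; apply: val_inj; exact: invol_mx. Qed.

Lemma invV (y : gT) : tv (N y) -> (y^-1 = y)%g.
Proof. by move=> /invol h; apply: mulg1_eq. Qed.

Lemma comm_rtri (s t : gT) : N s *m N t = 0 -> N t *m N s = 0 -> rtri s t = t.
Proof.
move=> h1 h2.
have c : (s * t = t * s)%g by apply: val_inj; exact: comm_mx.
by rewrite /rtri conjgE invgK mulgA c mulgK.
Qed.

Lemma GL_expE (g : gT) k : GLval (g ^+ k)%g = (GLval g) ^+ k.
Proof.
elim: k => [|k IH]; first by [].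
by rewrite expgS exprS GL_ME IH.
Qed.

Lemma gen (s t : gT) (Rb Rc : {set gT}) :
  tv (N s) -> tv (N t) -> N s *m N t != 0 -> N t *m N s != 0 ->
  s \in Rb -> t \in Rc -> (forall z, z \in Rb -> rtri s z \in Rb) ->
  (forall z, z \in Rb -> rtri t z \in Rb) -> [disjoint Rb & Rc] -> False.
Proof.
move=> ts tt nst nts sRb tRc cs ct dis.
have sV := invV ts; have tV := invV tt; have ss := invol ts.
set g := (t * s)%g; set gi := (g^-1)%g.
have egi : gi = (s * t)%g by rewrite /gi /g invMg sV tV.
have gs : (g * s = t)%g by rewrite /g -mulgA ss mulg1.
have zin : forall m, (s ^ (gi ^+ m))%g \in Rb.
  elim => [|m IH]; first by rewrite expg0 conjg1.
  rewrite expgSr conjgM; move: IH; set z := (s ^ gi ^+ m)%g => IH.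
  rewrite /gi /g invMg conjgM; exact: (ct _ (cs _ IH)).
have sg : forall m, (s * gi ^+ m = g ^+ m * s)%g.
  elim => [|m IH]; first by rewrite expg0 mulg1 mul1g.
  rewrite expgSr mulgA IH -mulgA egi (mulgA s s t) ss mul1g -gs mulgA -expgSr.
  by [].
have conjm : forall m, (s ^ (gi ^+ m) = g ^+ (m + m) * s)%g.
  move=> m; rewrite conjgE sg /gi expVgn invgK mulgA expgnDr //.
have nS : (0 < #[g]%g)%N := order_gt0 g.
case: (boolP (odd #[g]%g)) => [on|en].
  have e2 : ((#[g]%g.+1)./2 + (#[g]%g.+1)./2 = #[g]%g.+1)%N.
    by rewrite addnn even_halfK //= on.
  have := zin (#[g]%g.+1)./2; rewrite conjm e2 expgSr expg_order mul1g gs.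
  by move=> tb; rewrite (disjointFr dis tb) in tRc.
set k := (#[g]%g)./2.
have ek : (k + k = #[g]%g)%N by rewrite addnn even_halfK.
set h := (g ^+ k)%g.
have hh : (h * h = 1)%g by rewrite /h -expgnDr ek expg_order.
have hn1 : h != 1%g.
  apply/negP => /eqP h1.
  have : (#[g]%g %| k)%N by rewrite order_dvdn -/h h1.
  move/dvdn_leq; rewrite -ek; move: nS; rewrite -ek => nS.
  have k0 : (0 < k)%N by move: nS; case: (k) => [|k1] //=.
  by move/(_ k0); rewrite -{3}(addn0 k) leq_add2l leqn0 => /eqP k00; rewrite k00 in k0.
have hsE : (h ^ s = h)%g.
  have gsE : (g ^ s = gi)%g by rewrite conjgE sV gs egi.
  by rewrite /h conjXg gsE /gi expVgn (mulg1_eq hh).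
have hs : commute h s by rewrite /commute conjgC hsE.
have ht : commute h t.
  rewrite -gs; apply: commuteM => //; apply: commute_sym; apply: commuteX; exact: commute_refl.
have HH : GLval h *m GLval h = 1 := congr1 (@GLval 3 F) hh.
have HS : GLval h *m GLval s = GLval s *m GLval h := congr1 (@GLval 3 F) hs.
have HT : GLval h *m GLval t = GLval t *m GLval h := congr1 (@GLval 3 F) ht.
have eM : N h = ((1 + N t) *m (1 + N s)) ^+ k - 1.
  by rewrite !(addrC 1) !subrK /h GL_expE.
have M0 := M_zero ts tt nst nts (sq_mx c2 HH) (comm1_mx HS) (comm1_mx HT) eM.
by case/eqP: hn1; apply: val_inj; apply: subr0_eq.
Qed.
End G.

Theorem mainTheorem17 (F : finFieldType) (q_even : ~~ odd #|F|)
  (x : {'GL_3[F]}) (xSL : x \in SL3 F) (xu : unipotent_type21 (GLval x)) :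
  ~ typeF (x ^: SL3 F)%g.
Proof.
move=> [R [r [sub dis mem act nc]]].
have c2 := char2 q_even.
have tvx : tv (GLval x - 1) := tv_x xu.
have tvC : forall y, y \in (x ^: SL3 F)%g -> tv (GLval y - 1).
  move=> y /imsetP[g _ ->].
  have uG := GL_unitmx g.
  have -> : GLval (x ^ g)%g = invmx (GLval g) *m GLval x *m GLval g.
    by rewrite conjgE GL_MxE GL_VxE GL_MxE mulmxA.
  by rewrite conj_sub1 //; apply: tv_conj.
have RC : forall a y, y \in R a -> y \in (x ^: SL3 F)%g.
  by move=> a y; case/andP: (sub a) => /subsetP H _; exact: H.
have tvR : forall a y, y \in R a -> tv (GLval y - 1) by move=> a y /RC; exact: tvC.
have clos : forall a b y z, y \in R a -> z \in R b -> rtri y z \in R b.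
  move=> a b y z ya zb; case: (eqVneq a b) => [eab|ab].
    rewrite -eab in zb *; case/andP: (sub a) => _ /forall_inP H.
    by move/forall_inP: (H y ya) => /(_ z zb).
  by rewrite -(act a b ab); apply: imset2_f.
pose Nm a := GLval (r a) - 1.
pose D a b := Nm a *m Nm b != 0.
have tva : forall a, tv (Nm a) by move=> a; exact: tvR (mem a).
have Dor : forall a b, a != b -> D a b || D b a.
  move=> a b ab; apply/negPn/negP; rewrite negb_or !negbK => /andP[/eqP h1 /eqP h2].
  by move: (nc a b ab); rewrite comm_rtri ?eqxx.
have Dxor : forall a b, a != b -> ~~ (D a b && D b a).
  move=> a b ab; apply/negP => /andP[h1 h2].
  apply: (gen c2 (s:=r a) (t:=r b) (Rb:=R a) (Rc:=R b) (tva a) (tva b) h1 h2 (mem a) (mem b) _ _ (dis a b ab)).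
  - by move=> z za; apply: clos (mem a) za.
  - by move=> z za; apply: clos (mem b) za.
have Dir : forall a, ~~ D a a by move=> a; rewrite /D tv_sq // eqxx.
have tourn : forall a b, a != b -> D a b = ~~ D b a.
  by move=> a b ab; move: (Dor a b ab) (Dxor a b ab); case: (D a b); case: (D b a).
have neq : forall u v, D u v -> u != v.
  by move=> u v; apply: contraTneq => ->; exact: Dir.
have neqs : forall u v, D u v -> v != u.
  by move=> u v h; rewrite eq_sym; exact: neq _ _ h.
have nocyc : forall a b c, D a b -> D b c -> D c a -> False.
  move=> a b c ab bc ca.
  have ba : Nm b *m Nm a = 0.
    by move: (tourn b a (neqs _ _ ab)); rewrite ab /D => /negbFE/eqP.
  have cb : Nm c *m Nm b = 0.
    by move: (tourn c b (neqs _ _ bc)); rewrite bc /D => /negbFE/eqP.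
  pose s := rtri (r a) (r b).
  have sb : s \in R b := clos _ _ _ _ (mem a) (mem b).
  have eS : GLval s - 1 = (1 + Nm a) *m ((1 + Nm b) *m (1 + Nm a)) - 1.
    rewrite /Nm !(addrC 1) !subrK /s /rtri conjgE invgK (invV c2 (tva a)).
    by rewrite !GL_MxE.
  have [h1 h2] := cyc_mx c2 (tva a) ab bc ca ba cb.
  apply: (gen c2 (s:=s) (t:=r c) (Rb:=R b) (Rc:=R c) (tvR _ _ sb) (tva c) _ _ sb (mem c) _ _ (dis b c (neq _ _ bc))).
  - by rewrite eS.
  - by rewrite eS.
  - by move=> z zb; apply: clos sb zb.
  - by move=> z zb; apply: clos (mem c) zb.
have [a [b [c [d /andP[h1 /andP[h2 /andP[h3 /andP[h4 /andP[h5 h6]]]]]]]]] := comb tourn nocyc.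
apply: (chain (tva a) (tva b) (tva c) (tva d) h1 h2 h3).
- by move/negPn/eqP: h4.
- by move/negPn/eqP: h5.
- by move/negPn/eqP: h6.
Qed.
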